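(* For every leaf node $u$ in a partially built threshold tree $\mathcal{T}_t$, we have $\frac{1}{\sqrt{2}} R_u \leq D_u \leq 2R_u$.
   Context: Let $C_u\subseteq \mathbb{R}^d$ be the finite set of centers assigned to node $u$ of the threshold tree being built by the algorithm. Let $m^u$ be a (coordinate-wise) median of $C_u$, i.e., a point such that for every coordinate $i$, each of the sets $\{c\in C_u: c_i < m^u_i\}$ and $\{c\in C_u: c_i > m^u_i\}$ contains at most half of the points of $C_u$. Let $R_u = \max\{\|c-m^u\|_2 : c\in C_u\}$ be the maximum distance from $m^u$ to a center in $C_u$, and let $D_u = \max\{\|c'-c''\|_2 : c',c''\in C_u\}$ be the diameter of $C_u$. *)

(* Defs.v *)
From mathcomp Require Import all_boot all_order all_algebra.
Set Implicit Arguments. Unset Strict Implicit. Unset Printing Implicit Defensive.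
Import Order.TTheory GRing.Theory Num.Theory.
Local Open Scope ring_scope.

Definition eucl_dist (R : rcfType) (d : nat) (x y : 'rV[R]_d) : R :=
  Num.sqrt (\sum_(i < d) (x ord0 i - y ord0 i) ^+ 2).

Definition coord_median (R : rcfType) (d : nat) (C : seq 'rV[R]_d) (m : 'rV[R]_d) : Prop :=
  forall i : 'I_d,
    leq (count (fun c : 'rV[R]_d => c ord0 i < m ord0 i) C).*2 (size C) /\
    leq (count (fun c : 'rV[R]_d => m ord0 i < c ord0 i) C).*2 (size C).

(* R_u = max_{c in C} ||c - m||_2 (distances are >= 0, so 0 is a neutral start) *)
Definition max_radius (R : rcfType) (d : nat) (C : seq 'rV[R]_d) (m : 'rV[R]_d) : R :=
  \big[Num.max/0]_(c <- C) eucl_dist c m.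

Definition diameter (R : rcfType) (d : nat) (C : seq 'rV[R]_d) : R :=
  \big[Num.max/0]_(c1 <- C) \big[Num.max/0]_(c2 <- C) eucl_dist c1 c2.

(* Main.v *)
Require Import Defs.
From mathcomp Require Import all_boot all_order all_algebra.
From mathcomp Require Import ring lra.
From mathcomp Require Import zify.
Import Order.TTheory GRing.Theory Num.Theory.
Local Open Scope ring_scope.

Set Implicit Arguments.
Section Aux.
Context {R : rcfType}.

Lemma bmax_le (T : eqType) (C : seq T) (F : T -> R) (M : R) :
  0 <= M -> (forall c, c \in C -> F c <= M) -> \big[Num.max/0]_(c <- C) F c <= M.
Proof.
move=> M0; elim: C => [|x s IH] H; first by rewrite big_nil.
rewrite big_cons ge_max H ?mem_head //= IH // => c cs.
by apply: H; rewrite in_cons cs orbT.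
Qed.

Lemma le_bmax (T : eqType) (C : seq T) (F : T -> R) c :
  c \in C -> F c <= \big[Num.max/0]_(c <- C) F c.
Proof.
elim: C => [|x s IH] //; rewrite in_cons big_cons le_max => /orP [/eqP->|cs].
  by rewrite lexx.
by rewrite IH ?orbT.
Qed.

Lemma bmax_ge0 (T : eqType) (C : seq T) (F : T -> R) :
  0 <= \big[Num.max/0]_(c <- C) F c.
Proof.
elim: C => [|x s IH]; first by rewrite big_nil.
by rewrite big_cons le_max IH orbT.
Qed.

Lemma CS d (a b : 'I_d -> R) :
  (\sum_i a i * b i) ^+ 2 <= (\sum_i a i ^+ 2) * (\sum_i b i ^+ 2).
Proof.
have E : ((\sum_i a i ^+ 2) * (\sum_i b i ^+ 2) - (\sum_i a i * b i) ^+ 2) *+ 2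
   = \sum_i \sum_j (a i * b j - a j * b i) ^+ 2.
  have H1 : (\sum_i a i ^+ 2) * (\sum_i b i ^+ 2) = \sum_i \sum_j (a i ^+ 2 * b j ^+ 2).
    by rewrite mulr_suml; apply: eq_bigr => i _; rewrite mulr_sumr.
  have H2 : (\sum_i a i ^+ 2) * (\sum_i b i ^+ 2) = \sum_i \sum_j (a j ^+ 2 * b i ^+ 2).
    by rewrite H1 exchange_big.
  have H3 : (\sum_i a i * b i) ^+ 2 = \sum_i \sum_j (a i * b i * (a j * b j)).
    by rewrite expr2 mulr_suml; apply: eq_bigr => i _; rewrite mulr_sumr.
  rewrite mulrnBl mulr2n {1}H1 H2 H3 -!big_split -sumrMnl -sumrB /=.
  apply: eq_bigr => i _; rewrite -!big_split -sumrMnl -sumrB /=.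
  by apply: eq_bigr => j _; ring.
have : 0 <= \sum_i \sum_j (a i * b j - a j * b i) ^+ 2.
  by apply: sumr_ge0 => i _; apply: sumr_ge0 => j _; apply: sqr_ge0.
rewrite -E pmulrn_lge0 // subr_ge0 //.
Qed.

Definition sqd d (x y : 'rV[R]_d) : R := \sum_(i < d) (x ord0 i - y ord0 i) ^+ 2.

Lemma sq_ge0 d (x y : 'rV[R]_d) : 0 <= sqd x y.
Proof. by apply: sumr_ge0 => i _; apply: sqr_ge0. Qed.

Lemma dist_ge0 d (x y : 'rV[R]_d) : 0 <= eucl_dist x y.
Proof. exact: sqrtr_ge0. Qed.

Lemma dist_sym d (x y : 'rV[R]_d) : eucl_dist x y = eucl_dist y x.
Proof.
by rewrite /eucl_dist; congr Num.sqrt; apply: eq_bigr => i _; rewrite -sqrrN opprB.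
Qed.

Lemma dist_tri d (x y z : 'rV[R]_d) :
  eucl_dist x z <= eucl_dist x y + eucl_dist y z.
Proof.
rewrite /eucl_dist.
set a := fun i : 'I_d => x ord0 i - y ord0 i.
set b := fun i : 'I_d => y ord0 i - z ord0 i.
have -> : \sum_(i < d) (x ord0 i - z ord0 i) ^+ 2 = \sum_i (a i + b i) ^+ 2.
  by apply: eq_bigr => i _; rewrite /a /b; congr (_ ^+ 2); ring.
rewrite -/(\sum_i a i ^+ 2) -/(\sum_i b i ^+ 2).
set A := \sum_i a i ^+ 2; set B := \sum_i b i ^+ 2.
have A0 : 0 <= A by apply: sumr_ge0 => i _; apply: sqr_ge0.
have B0 : 0 <= B by apply: sumr_ge0 => i _; apply: sqr_ge0.
have S0 : 0 <= Num.sqrt A + Num.sqrt B by rewrite addr_ge0 ?sqrtr_ge0.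
rewrite -[X in _ <= X]ger0_norm // -sqrtr_sqr ler_sqrt ?sqr_ge0 //.
have -> : \sum_i (a i + b i) ^+ 2 = A + B + (\sum_i a i * b i) *+ 2.
  rewrite /A /B -big_split -sumrMnl -big_split /=.
  by apply: eq_bigr => i _; ring.
have Hab : \sum_i a i * b i <= Num.sqrt A * Num.sqrt B.
  rewrite -sqrtrM // (le_trans (real_ler_norm _)) ?num_real //.
  by rewrite -sqrtr_sqr ler_sqrt ?mulr_ge0 // CS.
rewrite sqrrD !sqr_sqrtr //.
have : (\sum_i a i * b i) *+ 2 <= (Num.sqrt A * Num.sqrt B) *+ 2 by rewrite lerMn2r.
move: Hab; lra.
Qed.


Lemma sum_const_cnt (T : eqType) (C : seq T) (P : pred T) (a : R) :
  \sum_(c <- C | P c) a = a *+ count P C.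
Proof.
elim: C => [|x s IH]; first by rewrite big_nil.
by rewrite big_cons /= IH; case: (P x) => //=; rewrite mulrS.
Qed.

Lemma sum_le_const (T : eqType) (C : seq T) (f : T -> R) (M : R) :
  (forall c, c \in C -> f c <= M) -> \sum_(c <- C) f c <= M *+ size C.
Proof.
elim: C => [|x s IH] H; first by rewrite big_nil.
rewrite big_cons /= mulrS lerD ?H ?mem_head // IH // => c cs.
by apply: H; rewrite in_cons cs orbT.
Qed.

Lemma half_bound (T : eqType) (C : seq T) (P Q : pred T) (f : T -> R) (a : R) :
  (count P C + count Q C = size C)%N -> ((count Q C).*2 <= size C)%N ->
  (forall c, 0 <= f c) -> (forall c, P c -> a <= f c) -> 0 <= a ->
  (size C)%:R * a <= 2 * \sum_(c <- C) f c.
Proof.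
move=> Hc Hq f0 Pf a0.
have H1 : a *+ count P C <= \sum_(c <- C) f c.
  rewrite -sum_const_cnt [X in _ <= X](bigID P) /= -[X in X <= _]addr0.
  by rewrite lerD ?sumr_ge0 // ler_sum.
have H2 : ((size C)%:R : R) <= 2 * (count P C)%:R.
  rewrite -(natrM R 2) ler_nat; rewrite -!mul2n in Hq *; lia.
apply: (le_trans (ler_wpM2r a0 H2)).
rewrite -mulrA ler_wpM2l // mulr_natl //.
Qed.
End Aux.


Lemma key (R : rcfType) d (C : seq 'rV[R]_d) m c :
  coord_median C m ->
  (size C)%:R * sqd c m <= 2 * \sum_(c' <- C) sqd c c'.
Proof.
move=> Hm; rewrite /sqd mulr_sumr exchange_big mulr_sumr /=.
apply: ler_sum => i _.
have [Hlo Hhi] := Hm i.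
have [le_mc|lt_cm] := leP (m ord0 i) (c ord0 i).
- apply: (@half_bound R _ C (fun c' => c' ord0 i <= m ord0 i) (fun c' => m ord0 i < c' ord0 i)) => //.
  + rewrite -(count_predC (fun c' : 'rV[R]_d => m ord0 i < c' ord0 i) C) addnC.
    by congr (_ + _)%N; apply: eq_count => c' /=; rewrite leNgt.
  + by move=> c'; apply: sqr_ge0.
  + move=> c' /= H; rewrite -subr_ge0 in le_mc; nra.
  + exact: sqr_ge0.
- apply: (@half_bound R _ C (fun c' => m ord0 i <= c' ord0 i) (fun c' => c' ord0 i < m ord0 i)) => //.
  + rewrite -(count_predC (fun c' : 'rV[R]_d => c' ord0 i < m ord0 i) C) addnC.
    by congr (_ + _)%N; apply: eq_count => c' /=; rewrite leNgt.
  + by move=> c'; apply: sqr_ge0.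
  + move=> c' /= H; nra.
  + exact: sqr_ge0.
Qed.


Theorem lemma2 (R : rcfType) (d : nat) (C : seq 'rV[R]_d) (m : 'rV[R]_d) :
  C != [::] -> uniq C -> coord_median C m ->
  max_radius C m / Num.sqrt 2 <= diameter C /\ diameter C <= 2 * max_radius C m.
Proof.
move=> Cn _ Hm; split.
- have s20 : 0 < Num.sqrt 2 :> R by rewrite sqrtr_gt0.
  rewrite ler_pdivrMr // mulrC.
  set D := diameter C.
  have D0 : 0 <= D by apply: bmax_ge0.
  apply: bmax_le; first by rewrite mulr_ge0 // ltW.
  move=> c cC.
  have HD : forall c', c' \in C -> sqd c c' <= D ^+ 2.
    move=> c' c'C.
    have h1 : eucl_dist c c' <= D.
      rewrite /D /diameter.
      apply: (le_trans (@le_bmax _ _ C (fun c2 => eucl_dist c c2) c' c'C)).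
      exact: (@le_bmax _ _ C (fun c1 => \big[Num.max/0]_(c2 <- C) eucl_dist c1 c2) c cC).
    have -> : sqd c c' = eucl_dist c c' ^+ 2 by rewrite /eucl_dist sqr_sqrtr // sq_ge0.
    by rewrite lerXn2r ?nnegrE ?sqrtr_ge0.
  have Hk := key c Hm.
  have Hs := @sum_le_const _ _ C (fun c2 => sqd c c2) _ HD.
  have n0 : (0 : R) < (size C)%:R by rewrite ltr0n lt0n size_eq0.
  have Hc : sqd c m <= 2 * D ^+ 2.
    rewrite -(ler_pM2l n0); apply: (le_trans Hk).
    rewrite -mulr_natr in Hs; nra.
  rewrite /eucl_dist -/(sqd c m).
  rewrite -(ger0_norm D0) -sqrtr_sqr -sqrtrM // ler_sqrt ?mulr_ge0 ?sqr_ge0 //.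
- apply: bmax_le; first by rewrite mulr_ge0 // bmax_ge0.
  move=> c1 c1C; apply: bmax_le; first by rewrite mulr_ge0 // bmax_ge0.
  move=> c2 c2C; apply: (le_trans (dist_tri c1 m c2)).
  rewrite (dist_sym m c2) mulr2n mulrDl mul1r lerD //.
    exact: (@le_bmax _ _ C (fun c => eucl_dist c m) c1 c1C).
  exact: (@le_bmax _ _ C (fun c => eucl_dist c m) c2 c2C).
Qed.
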